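(* Let $T\subseteq\mathbb{P}^{\circ}$ and let $\mathsf{X},\mathsf{Y}$ be proper intermediate temporal logics with $\mathsf{X}\subseteq\mathsf{Y}$. For every temporal theory $\Gamma$, if $T$ is an $\mathsf{X}$-temporal safe belief set of $\Gamma$, then $T$ is a $\mathsf{Y}$-temporal safe belief set of $\Gamma$.
   Context: Fix a countable set $\mathbb{P}$ of atoms. Temporal formulas: $\varphi ::= p\mid\bot\mid\varphi\wedge\varphi\mid\varphi\vee\varphi\mid\varphi\to\varphi\mid\circ\varphi\mid\varphi\,\mathsf{U}\,\varphi\mid\varphi\,\mathsf{R}\,\varphi$; $\neg\varphi:=\varphi\to\bot$, $\Box\varphi:=\bot\,\mathsf{R}\,\varphi$, $\circ^0\varphi:=\varphi$, $\circ^{i+1}\varphi:=\circ\circ^i\varphi$. An intuitionistic temporal frame is $(W,\preccurlyeq,S)$ with $W\ne\emptyset$, $\preccurlyeq$ a partial order, $S:W\to W$ with forward confluence ($w\preccurlyeq v\Rightarrow S(w)\preccurlyeq S(v)$); persistent if also backward confluent (if $S(w)=v\preccurlyeq u$ then some $t\succcurlyeq w$ has $S(t)=u$). A model adds $V:W\to2^{\mathbb{P}}$ monotone along $\preccurlyeq$. Satisfaction: $p$ via $V$; $\bot$ never; $\wedge,\vee$ pointwise; $M,w\models\varphi\to\psi$ iff for all $v\succcurlyeq w$, $M,v\models\varphi$ implies $M,v\models\psi$; $\circ\varphi$ at $w$ iff $\varphi$ at $S(w)$; $\varphi\,\mathsf{U}\,\psi$: some $k\ge0$ with $\psi$ at $S^k(w)$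 and $\varphi$ at $S^i(w)$ for all $0\le i<k$; $\varphi\,\mathsf{R}\,\psi$: for all $k\ge0$, $\psi$ at $S^k(w)$ or $\varphi$ at some $S^i(w)$, $0\le i<k$. Depth $\le n$: no chain of $n+1$ pairwise distinct $\preccurlyeq$-related worlds. $\mathrm{ITL}^{\mathrm{BD}_n}$: formulas true at every world of every model on a persistent frame of depth $\le n$; $\mathrm{LTL}:=\mathrm{ITL}^{\mathrm{BD}_1}$. An intermediate temporal logic is a set $\mathsf{X}$ with $\mathrm{ITL}^{\mathrm{BD}_n}\subseteq\mathsf{X}\subseteq\mathrm{LTL}$ for some $n\ge1$, closed under modus ponens, necessitation ($\psi\in\mathsf{X}\Rightarrow\circ\psi,\Box\psi\in\mathsf{X}$) and uniform substitution; it is proper if $\mathsf{X}\ne\mathrm{LTL}$. $\mathsf{X}$-models: models on persistent frames of depth $\le n$ validating all of $\mathsf{X}$ (for $\mathsf{X}=\mathrm{THT}$, the models on the frame $\mathbb{N}\times\{0,1\}$ with $(i,h)\preccurlyeq(j,t)$ iff $i=j,h\le t$ and $S((i,k))=(i+1,k)$). $\Gamma$ is $\mathsf{X}$-consistent if some $\mathsf{X}$-model satisfies all of $\Gamma$ at some world; $\Gamma\models_{\mathsf{X}}\Delta$: every $\mathsf{X}$-model and world satisfying all of $\Gamma$ satisfies all of $\Delta$. $\mathbb{P}^{\circ}:=\{\circ^ip\mid p\in\mathbb{P},i\ge0\}$. $T\subseteq\mathbb{P}^{\circ}$ is an $\mathsf{X}$-temporal safe belief set of $\Gamma$ if $\Sigma_T:=\Gamma\cup\{\circ^i\neg\neg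 p\mid\circ^ip\in T\}\cup\{\circ^i\neg p\mid\circ^ip\notin T\}$ is $\mathsf{X}$-consistent and $\Sigma_T\models_{\mathsf{X}}T$. *)

(* Defs.v *)
From Stdlib Require Import Arith.

Inductive formula : Type :=
| Atom : nat -> formula
| Bot : formula
| And : formula -> formula -> formula
| Or : formula -> formula -> formula
| Imp : formula -> formula -> formula
| Next : formula -> formula
| Until : formula -> formula -> formula
| Release : formula -> formula -> formula.

Definition Neg (phi : formula) : formula := Imp phi Bot.
Definition Box (phi : formula) : formula := Release Bot phi.
Fixpoint nexts (i : nat) (phi : formula) : formula :=
  match i with 0 => phi | S k => Next (nexts k phi) end.

Fixpoint subst (s : nat -> formula) (phi : formula) : formula :=
  match phi with
  | Atom p => s p
  | Bot => Bot
  | And a b => And (subst s a) (subst s b)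
  | Or a b => Or (subst s a) (subst s b)
  | Imp a b => Imp (subst s a) (subst s b)
  | Next a => Next (subst s a)
  | Until a b => Until (subst s a) (subst s b)
  | Release a b => Release (subst s a) (subst s b)
  end.

Record frame : Type := Frame {
  fW : Type;
  fle : fW -> fW -> Prop;
  fS : fW -> fW }.

Definition is_persistent_frame (F : frame) : Prop :=
  inhabited (fW F) /\
  (forall w, fle F w w) /\
  (forall u v w, fle F u v -> fle F v w -> fle F u w) /\
  (forall u v, fle F u v -> fle F v u -> u = v) /\
  (forall w v, fle F w v -> fle F (fS F w) (fS F v)) /\
  (forall w u, fle F (fS F w) u -> exists t, fle F w t /\ fS F t = u).

Definition depth_le (F : frame) (n : nat) : Prop :=
  ~ exists c : nat -> fW F,
      forall i j, i < j -> j <= n -> fle F (c i) (c j) /\ c i <> c j.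

Definition valuation (F : frame) := fW F -> nat -> Prop.

Definition monotone_val (F : frame) (V : valuation F) : Prop :=
  forall w v p, fle F w v -> V w p -> V v p.

Fixpoint iterS (F : frame) (k : nat) (w : fW F) : fW F :=
  match k with 0 => w | S k' => fS F (iterS F k' w) end.

Fixpoint sat (F : frame) (V : valuation F) (w : fW F) (phi : formula) : Prop :=
  match phi with
  | Atom p => V w p
  | Bot => False
  | And a b => sat F V w a /\ sat F V w b
  | Or a b => sat F V w a \/ sat F V w b
  | Imp a b => forall v, fle F w v -> sat F V v a -> sat F V v b
  | Next a => sat F V (fS F w) a
  | Until a b => exists k, sat F V (iterS F k w) b /\
                   forall i, i < k -> sat F V (iterS F i w) a
  | Release a b => forall k, sat F V (iterS F k w) b \/
                   exists i, i < k /\ sat F V (iterS F i w) a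
  end.

Definition ITL_BD (n : nat) (phi : formula) : Prop :=
  forall (F : frame) (V : valuation F), is_persistent_frame F -> depth_le F n ->
    monotone_val F V -> forall w, sat F V w phi.

Definition LTL : formula -> Prop := ITL_BD 1.

Definition intermediate_temporal_logic (X : formula -> Prop) : Prop :=
  (exists n, 1 <= n /\ (forall phi, ITL_BD n phi -> X phi)) /\
  (forall phi, X phi -> LTL phi) /\
  (forall phi psi, X phi -> X (Imp phi psi) -> X psi) /\
  (forall psi, X psi -> X (Next psi) /\ X (Box psi)) /\
  (forall (s : nat -> formula) phi, X phi -> X (subst s phi)).

Definition proper_itl (X : formula -> Prop) : Prop :=
  intermediate_temporal_logic X /\ ~ (forall phi, X phi <-> LTL phi).

Definition frame_validates (F : frame) (X : formula -> Prop) : Prop :=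
  forall (V : valuation F), monotone_val F V -> forall w phi, X phi -> sat F V w phi.

Definition X_model (X : formula -> Prop) (F : frame) (V : valuation F) : Prop :=
  (exists n, 1 <= n /\ (forall phi, ITL_BD n phi -> X phi) /\ depth_le F n) /\
  is_persistent_frame F /\ monotone_val F V /\ frame_validates F X.

Definition X_consistent (X : formula -> Prop) (G : formula -> Prop) : Prop :=
  exists (F : frame) (V : valuation F) (w : fW F),
    X_model X F V /\ forall phi, G phi -> sat F V w phi.

Definition X_entails (X : formula -> Prop) (G D : formula -> Prop) : Prop :=
  forall (F : frame) (V : valuation F) (w : fW F),
    X_model X F V -> (forall phi, G phi -> sat F V w phi) ->
    forall phi, D phi -> sat F V w phi.

Definition in_Pcirc (phi : formula) : Prop := exists i p, phi = nexts i (Atom p).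

Definition Sigma_T (G T : formula -> Prop) : formula -> Prop := fun phi =>
  G phi \/
  (exists i p, T (nexts i (Atom p)) /\ phi = nexts i (Neg (Neg (Atom p)))) \/
  (exists i p, ~ T (nexts i (Atom p)) /\ phi = nexts i (Neg (Atom p))).

Definition temporal_safe_belief_set (X G T : formula -> Prop) : Prop :=
  X_consistent X (Sigma_T G T) /\ X_entails X (Sigma_T G T) T.

(* Main.v *)
Require Import Defs.
From Stdlib Require Import Arith Lia Classical.

Section S.
Variable F : frame.
Hypothesis HF : is_persistent_frame F.

Lemma refl_ w : fle F w w. Proof. destruct HF as (_&h&_); auto. Qed.
Lemma trans_ u v w : fle F u v -> fle F v w -> fle F u w.
Proof. destruct HF as (_&_&h&_); eauto. Qed.
Lemma anti_ u v : fle F u v -> fle F v u -> u = v.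
Proof. destruct HF as (_&_&_&h&_); eauto. Qed.
Lemma fwd_ u v : fle F u v -> fle F (fS F u) (fS F v).
Proof. destruct HF as (_&_&_&_&h&_); eauto. Qed.
Lemma bwd_ w u : fle F (fS F w) u -> exists t, fle F w t /\ fS F t = u.
Proof. destruct HF as (_&_&_&_&_&h); eauto. Qed.

Lemma iter_mono k u v : fle F u v -> fle F (iterS F k u) (iterS F k v).
Proof. induction k; simpl; auto using fwd_. Qed.

Lemma sat_mono V : monotone_val F V -> forall phi w v,
  fle F w v -> sat F V w phi -> sat F V v phi.
Proof.
  intros HV phi; induction phi; simpl; intros w v Hwv H.
  - eauto.
  - auto.
  - destruct H; eauto.
  - destruct H; eauto.
  - intros x Hx; apply H; eauto using trans_.
  - eapply IHphi; [apply fwd_; eauto| auto].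
  - destruct H as [k [H1 H2]]; exists k; split; [eauto using iter_mono|].
    intros i Hi; eauto using iter_mono.
  - intros k; destruct (H k) as [H1|[i [Hi H1]]]; [left; eauto using iter_mono|right].
    exists i; split; eauto using iter_mono.
Qed.

Definition maxl u := forall v, fle F u v -> v = u.

Lemma maxl_S u : maxl u -> maxl (fS F u).
Proof.
  intros Hu v Hv. destruct (bwd_ _ _ Hv) as [t [Ht Et]].
  rewrite (Hu t Ht) in Et. auto.
Qed.

Lemma maxl_iter u k : maxl u -> maxl (iterS F k u).
Proof. induction k; simpl; auto using maxl_S. Qed.

Lemma exists_max n : depth_le F n -> forall w, exists u, fle F w u /\ maxl u.
Proof.
  intros Hd w. apply NNPP; intro Hn.
  assert (Hs : forall u, fle F w u -> exists v, fle F u v /\ v <> u).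
  { intros u Hu. apply NNPP; intro H2. apply Hn. exists u; split; auto.
    intros v Hv. apply NNPP; intro H3. apply H2. eauto. }
  assert (forall k, exists c : nat -> fW F, fle F w (c k) /\
     forall i j, i < j -> j <= k -> fle F (c i) (c j) /\ c i <> c j).
  { induction k.
    - exists (fun _ => w). split; [apply refl_|]. intros; lia.
    - destruct IHk as [c [Hw Hc]].
      destruct (Hs _ Hw) as [v [Hv Hne]].
      exists (fun m => if Nat.leb m k then c m else v).
      split.
      + replace (Nat.leb (S k) k) with false by (symmetry; apply Nat.leb_gt; lia).
        eauto using trans_.
      + intros i j Hij Hj.
        replace (Nat.leb i k) with true by (symmetry; apply Nat.leb_le; lia).
        destruct (Nat.leb j k) eqn:E.
        * apply Nat.leb_le in E. auto.
        * apply Nat.leb_gt in E. assert (j = S k) by lia.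
          destruct (Nat.eq_dec i k) as [->|Hik].
          -- split; auto.
          -- destruct (Hc i k ltac:(lia) ltac:(lia)) as [H1 H2].
             split; [eauto using trans_|].
             intro Ev. apply H2. rewrite Ev in *. apply anti_; auto. }
  destruct (H n) as [c [_ Hc]]. apply Hd. exists c. auto.
Qed.

Definition Fn : frame := Frame nat (@eq nat) S.

Lemma iterFn k m : iterS Fn k m = k + m.
Proof. induction k; simpl; auto. Qed.

Lemma iter_add k m u : iterS F k (iterS F m u) = iterS F (k + m) u.
Proof. induction k; simpl; congruence. Qed.

Lemma sat_orbit V u : maxl u -> forall phi m,
  sat Fn (fun m p => V (iterS F m u) p) m phi <-> sat F V (iterS F m u) phi.
Proof.
  intros Hu phi; induction phi; simpl; intro m; try tauto.
  - rewrite IHphi1, IHphi2; tauto.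
  - rewrite IHphi1, IHphi2; tauto.
  - split.
    + intros H v Hv. rewrite (maxl_iter u m Hu v Hv).
      rewrite <- IHphi1, <- IHphi2. apply H; auto.
    + intros H v <-. rewrite IHphi1, IHphi2. apply H, refl_.
  - apply IHphi.
  - split; intros [k [H1 H2]]; exists k.
    + rewrite iterFn, IHphi2 in H1. rewrite iter_add. split; auto.
      intros i Hi. specialize (H2 i Hi). rewrite iterFn, IHphi1 in H2.
      rewrite iter_add; auto.
    + rewrite iterFn, IHphi2. rewrite iter_add in H1. split; auto.
      intros i Hi. specialize (H2 i Hi). rewrite iterFn, IHphi1.
      rewrite iter_add in H2; auto.
  - split; intros H k; destruct (H k) as [H1|[i [Hi H1]]].
    + left. rewrite iterFn, IHphi2 in H1. rewrite iter_add; auto.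
    + right. exists i. rewrite iterFn, IHphi1 in H1. rewrite iter_add; auto.
    + left. rewrite iterFn, IHphi2. rewrite iter_add in H1; auto.
    + right. exists i. rewrite iterFn, IHphi1. rewrite iter_add in H1; auto.
Qed.
End S.

Lemma Fn_persistent : is_persistent_frame Fn.
Proof.
  unfold is_persistent_frame; simpl. repeat split.
  - exact 0.
  - intros; congruence.
  - intros; congruence.
  - intros; congruence.
  - intros w u H. exists w. auto.
Qed.

Lemma Fn_depth n : 1 <= n -> depth_le Fn n.
Proof. intros Hn [c Hc]. destruct (Hc 0 1 ltac:(lia) Hn) as [H1 H2]. simpl in H1. auto. Qed.

Lemma depth_mono F n m : n <= m -> depth_le F n -> depth_le F m.
Proof. intros Hnm Hd [c Hc]. apply Hd. exists c. intros; apply Hc; lia. Qed.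

Lemma ITL_anti n m phi : n <= m -> ITL_BD m phi -> ITL_BD n phi.
Proof. intros Hnm H F V HF Hd HV w. apply H; eauto using depth_mono. Qed.

Theorem lemma5p4 (T : formula -> Prop) (X Y : formula -> Prop) :
  (forall phi, T phi -> in_Pcirc phi) ->
  proper_itl X -> proper_itl Y ->
  (forall phi, X phi -> Y phi) ->
  forall Gamma : formula -> Prop,
    temporal_safe_belief_set X Gamma T -> temporal_safe_belief_set Y Gamma T.
Proof.
  intros _ [[[nX [HnX HX]] [HXL _]] _] [[[nY [HnY HY]] [HYL _]] _] HXY Gamma [Hcons Hent].
  split.
  - destruct Hcons as (F & V & w & [[n [Hn [_ Hd]]] [HF [HV _]]] & Hsat).
    destruct (exists_max F HF n Hd w) as [u [Hwu Hu]].
    exists Fn, (fun m p => V (iterS F m u) p), 0. split.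
    + split; [exists nY; repeat split; auto using Fn_depth|].
      split; [apply Fn_persistent|]. split.
      * intros a b p E; simpl in E; subst; auto.
      * intros V' HV' w' phi Hphi. apply HYL in Hphi.
        apply Hphi; auto using Fn_persistent, Fn_depth.
    + intros phi Hphi. apply (sat_orbit F HF V u Hu phi 0). simpl.
      eapply sat_mono; eauto.
  - intros F V w [[n [Hn [Hn2 Hd]]] [HF [HV Hval]]] Hsat.
    apply Hent; auto.
    split; [|split; [auto|split; [auto|]]].
    + exists (Nat.max n nX). split; [lia|]. split.
      * intros phi Hphi. apply HX. eapply ITL_anti; [|exact Hphi]. lia.
      * eapply depth_mono; [|exact Hd]. lia.
    + intros V' HV' w' phi Hphi. apply Hval; auto.
Qed.
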